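(* Let $\mathcal{U}_i$ be a finite set, $D_i$ a probability distribution on $\mathcal{U}_i$, and $\bm{z}_i\in[0,1]^{\mathcal{U}_i}$ with $z_e\le D_i(e)$ for all $e\in\mathcal{U}_i$. Let $R\sim\bm{z}_i$ denote the random subset of $\mathcal{U}_i$ containing each $e$ independently with probability $z_e$. Consider the random set $T_i\subseteq\mathcal{U}_i$ produced as follows: draw $X_i\sim D_i$ with realization $e$; with probability $\Pr_{R\sim\bm{z}_i}[R=\{e\}]/D_i(e)$ set $T_i=\{e\}$; otherwise set $T_i$ to an (independent) random set drawn from $\bm{z}_i$ conditioned on $|R|\ne1$. Then for every $S\subseteq\mathcal{U}_i$, \[\Pr[T_i=S]=\Pr_{R\sim\bm{z}_i}[R=S].\]
   Context: Note $\Pr_{R\sim\bm{z}_i}[R=S]=\prod_{e\in S}z_e\prod_{e\in\mathcal{U}_i\setminus S}(1-z_e)$; the hypothesis $z_e\le D_i(e)$ ensures the probability $\Pr[R=\{e\}]/D_i(e)$ is at most $1$ (for realized $e$, $D_i(e)>0$). The conditioned draw is only needed in the ''otherwise'' branch. *)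

(* Defs.v *)
From mathcomp Require Import all_boot all_order all_algebra.
Set Implicit Arguments. Unset Strict Implicit. Unset Printing Implicit Defensive.
Import Order.TTheory GRing.Theory Num.Theory.
Local Open Scope ring_scope.

Section Defs.
Variables (R : realFieldType) (U : finType).

(* Pr_{R ~ z}[R = S]: each e included independently with probability z e. *)
Definition prZ (z : U -> R) (S : {set U}) : R :=
  \prod_(e in S) z e * \prod_(e in ~: S) (1 - z e).

Definition prZ_not_single (z : U -> R) : R :=
  \sum_(S : {set U} | #|S| != 1%N) prZ z S.

Definition prZ_cond (z : U -> R) (S : {set U}) : R :=
  (if #|S| != 1%N then prZ z S else 0) / prZ_not_single z.

(* Law of T_i: draw X ~ D with realization e; with probability
   q_e = Pr[R = {e}] / D e set T = {e}; otherwise (prob. 1 - q_e) draw T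
   independently from z conditioned on |R| <> 1.  By total probability,
   Pr[T = S] = sum_e D e * (q_e [S = {e}] + (1 - q_e) Pr[R = S | |R| <> 1]). *)
Definition prT (D z : U -> R) (S : {set U}) : R :=
  \sum_(e : U) D e *
    (let q := prZ z [set e] / D e in
     q * (S == [set e])%:R + (1 - q) * prZ_cond z S).

End Defs.

(* Main.v *)
Require Import Defs.
From mathcomp Require Import all_boot all_order all_algebra.
Import Order.TTheory GRing.Theory Num.Theory.
Local Open Scope ring_scope.

Lemma prZ_total (R : realFieldType) (U : finType) (z : U -> R) :
  \sum_(S : {set U}) prZ z S = 1.
Proof.
have -> : 1 = \prod_(e : U) \sum_(b : bool) (if b then z e else 1 - z e).
  by symmetry; rewrite big1 // => e _; rewrite big_bool /= addrC subrK.
rewrite bigA_distr_bigA.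
pose h (f : {ffun U -> bool}) : {set U} := [set x | f x].
have hb : bijective h.
  exists (fun S : {set U} => [ffun x => x \in S]) => [f|S].
    by apply/ffunP => x; rewrite ffunE inE.
  by apply/setP => x; rewrite inE ffunE.
rewrite (reindex h); last by apply: onW_bij.
apply: eq_bigr => f _; rewrite /prZ /h.
rewrite [RHS](bigID (fun e => f e)) /=; congr (_ * _).
  by apply: eq_big => [e|e]; rewrite ?inE /=; [by []| by move=> ->].
by apply: eq_big => [e|e]; rewrite ?inE /=; [by []| by move=> /negbTE ->].
Qed.

Lemma sum_single (R : realFieldType) (U : finType) (F : {set U} -> R) (S : {set U}) :
  \sum_(e : U) F [set e] * (S == [set e])%:R = if #|S| == 1%N then F S else 0.
Proof.
case: (@cards1P _ S) => [[x ->]|ns].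
  rewrite (bigD1 x) //= eqxx mulr1 big1 ?addr0 // => e /negbTE ne.
  case: eqP => [/set1_inj ex|]; last by rewrite mulr0.
  by rewrite ex eqxx in ne.
apply: big1 => e _; case: eqP => [ex|]; last by rewrite mulr0.
by exfalso; apply: ns; exists e.
Qed.

Lemma sum_card1 (R : realFieldType) (U : finType) (F : {set U} -> R) :
  \sum_(S : {set U} | #|S| == 1%N) F S = \sum_(e : U) F [set e].
Proof.
rewrite big_mkcond /=.
transitivity (\sum_(S : {set U}) \sum_(e : U) F [set e] * (S == [set e])%:R).
  by apply: eq_bigr => S _; rewrite sum_single.
rewrite exchange_big /=; apply: eq_bigr => e _.
rewrite (bigD1 [set e]) //= eqxx mulr1 big1 ?addr0 // => S /negbTE ->.
by rewrite mulr0.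
Qed.

Theorem lemma5 (R : realFieldType) (U : finType) (D z : U -> R)
  (hD0 : forall e, 0 <= D e) (hD1 : \sum_(e : U) D e = 1)
  (hz0 : forall e, 0 <= z e) (hz1 : forall e, z e <= 1)
  (hzD : forall e, z e <= D e) :
  forall S : {set U}, prT D z S = prZ z S.
Proof.
move=> S.
have hDq e : D e * (prZ z [set e] / D e) = prZ z [set e].
  have [De0|Den0] := eqVneq (D e) 0.
    have ze0 : z e = 0 by apply/le_anti; rewrite hz0 -De0 hzD.
    by rewrite /prZ big_set1 ze0 !mul0r De0 !mul0r.
  by rewrite mulrCA divff ?mulr1.
have hN : prZ_not_single z = 1 - \sum_e prZ z [set e].
  rewrite -(@prZ_total _ _ z) (bigID (fun S : {set U} => #|S| == 1%N)) /= sum_card1.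
  by rewrite /prZ_not_single addrC addrK.
have hge : forall S : {set U}, 0 <= prZ z S.
  move=> T; rewrite /prZ mulr_ge0 // prodr_ge0 // => e _; by rewrite ?subr_ge0.
rewrite /prT.
under eq_bigr => e _ do
  rewrite mulrDr mulrA hDq mulrA mulrBr mulr1 hDq.
rewrite big_split /= sum_single -mulr_suml sumrB hD1 -hN /prZ_cond.
case: ifPn => h1.
  by rewrite /= mul0r mulr0 addr0.
rewrite /= add0r.
have n1 : (#|S| != 1%N) by [].
have [N0|Nn0] := eqVneq (prZ_not_single z) 0.
  move: N0; rewrite /prZ_not_single => /eqP; rewrite psumr_eq0 => [/allP H|]; last by move=> *; apply: hge.
  have := H S; rewrite mem_index_enum n1 /= => /(_ isT) /eqP ->.
  by rewrite mul0r mulr0.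
by rewrite mulrCA divff ?mulr1.
Qed.
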